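(* Consider a commutative diagram of finitely generated free abelian groups consisting of injective morphisms $f:A\to B$ and $f':A'\to B'$ and morphisms $g:A\to A'$, $h:B\to B'$ with $f'\circ g=h\circ f$. Assume that $f$ and $f'$ have finite exponent. (1) If $h(B)=\lambda B'$ for some nonzero integer $\lambda$, then $(\exp f)\lambda A'\leq g(A)\leq \frac{\lambda}{\gcd(\lambda,\exp f')}A'$. (2) If $g(A)\leq\mu A'$ for some nonzero integer $\mu$, then $h(B)\leq\frac{\mu}{\gcd(\mu,\exp f)}B'$. (3) If $h$ has finite exponent then so does $g$, and $\exp g\leq (\exp f)(\exp h)$.
   Context: For a morphism $u:M\to N$ of finitely generated abelian groups, $\exp u:=\exp(N/u(M))$ if $N/u(M)$ is finite (where the exponent of a finite abelian group is the lcm of the orders of its elements), and $\exp u:=\infty$ otherwise; $u$ has finite exponent if $\exp u<\infty$. *)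

(* Defs.v *)
From HB Require Import structures.
From mathcomp Require Import all_boot all_order all_algebra.
Set Implicit Arguments. Unset Strict Implicit. Unset Printing Implicit Defensive.
Import Order.TTheory GRing.Theory Num.Theory.
Local Open Scope ring_scope.

(* A finitely generated free abelian group of rank n is modelled as Z^n = 'rV[int]_n.
   A morphism Z^m -> Z^n is an integer matrix F : 'M[int]_(m,n), acting on row
   vectors by x |-> x *m F (so composition  G then F'  is  G *m F'). *)

Definition img (m n : nat) (F : 'M[int]_(m, n)) : 'rV[int]_n -> Prop :=
  fun y => exists x : 'rV[int]_m, y = x *m F.

Definition mults (n : nat) (k : int) : 'rV[int]_n -> Prop :=
  fun y => exists z : 'rV[int]_n, y = k *: z.

Definition subgrp_le (n : nat) (H K : 'rV[int]_n -> Prop) : Prop :=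
  forall y, H y -> K y.

(* e is the (finite) exponent of the cokernel N / u(M): the least positive
   integer killing N / u(M) (= lcm of the element orders of the finite group
   N/u(M)).  If no positive integer kills N/u(M), then N/u(M) is infinite and
   exp u = oo; then no e satisfies this predicate. *)
Definition exponent_of (m n : nat) (F : 'M[int]_(m, n)) (e : nat) : Prop :=
  [/\ (0 < e)%N,
      (forall y : 'rV[int]_n, img F ((e%:Z) *: y))
    & (forall e' : nat, (0 < e')%N ->
         (forall y : 'rV[int]_n, img F ((e'%:Z) *: y)) -> (e <= e')%N)].

Definition has_finite_exp (m n : nat) (F : 'M[int]_(m, n)) : Prop :=
  exists e, exponent_of F e.

(* Main.v *)
Require Import Defs.
From HB Require Import structures.
From mathcomp Require Import all_boot all_order all_algebra.
From mathcomp Require Import ring.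
From Stdlib Require Import Classical.
Import Order.TTheory GRing.Theory Num.Theory.
Local Open Scope ring_scope.

Lemma div_row n (c k : int) (u v : 'rV[int]_n) : c != 0 -> c *: u = k *: v ->
  mults (k %/ gcdz k c)%Z u.
Proof.
move=> c0 E.
set d := gcdz k c.
have d0 : d != 0 by rewrite gcdz_eq0 negb_and c0 orbT.
have kd : (d %| k)%Z by apply: dvdz_gcdl.
have dv : forall i, ((k %/ d)%Z %| u ord0 i)%Z.
  move=> i.
  have Ei : c * u ord0 i = k * v ord0 i by have := congr1 (fun M : 'rV[int]_n => M ord0 i) E; rewrite !mxE.
  have [s [t Hst]] := Bezoutz k c.
  rewrite -(@dvdz_mul2r d) // divzK // /d -Hst mulrDr.
  have -> : u ord0 i * (t * c) = k * (t * v ord0 i) by transitivity (t * (c * u ord0 i)); [ring | rewrite Ei; ring].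
  by rewrite rpredD //; [apply: dvdz_mull; apply: dvdz_mull | apply: dvdz_mulr]; exact: dvdzz.
exists (\row_i divz (u ord0 i) (divz k d)).
apply/matrixP => o i; rewrite (ord1 o) !mxE mulrC divzK //.
Qed.

Lemma min_ex (P : nat -> Prop) n : P n -> exists m, P m /\ (forall k, P k -> (m <= k)%N).
Proof.
elim: n {-2}n (leqnn n) => [|N IH] n le.
  move: le; rewrite leqn0 => /eqP -> P0; exists 0%N; split => //.
move=> Pn.
case: (Classical_Prop.classic (exists k, (k < n)%N /\ P k)) => [[k [kn Pk]]|nk].
  apply: (IH k) => //; rewrite -ltnS; exact: leq_trans kn le.
exists n; split => // k Pk; rewrite leqNgt; apply/negP => kn; apply: nk; by exists k.
Qed.

Theorem lemma3p18 (a b a' b' : nat)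
  (f : 'M[int]_(a, b)) (f' : 'M[int]_(a', b'))
  (g : 'M[int]_(a, a')) (h : 'M[int]_(b, b'))
  (f_inj : injective (fun x : 'rV[int]_a => x *m f))
  (f'_inj : injective (fun x : 'rV[int]_a' => x *m f'))
  (comm : g *m f' = f *m h)
  (ef ef' : nat) (hef : exponent_of f ef) (hef' : exponent_of f' ef') :
  (* (1) *)
  (forall lambda : int, lambda != 0 ->
     (forall y : 'rV[int]_b', img h y <-> mults lambda y) ->
     subgrp_le (mults (ef%:Z * lambda)) (img g) /\
     subgrp_le (img g) (mults (lambda %/ gcdz lambda ef'%:Z)%Z)) /\
  (* (2) *)
  (forall mu : int, mu != 0 ->
     subgrp_le (img g) (mults mu) ->
     subgrp_le (img h) (mults (mu %/ gcdz mu ef%:Z)%Z)) /\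
  (* (3) *)
  (forall eh : nat, exponent_of h eh ->
     exists eg : nat, exponent_of g eg /\ (eg <= ef * eh)%N).
Proof.
case: hef => ef0 efk _; case: hef' => ef'0 ef'k _.
have key : forall x : 'rV[int]_a, (x *m g) *m f' = (x *m f) *m h.
  by move=> x; rewrite -!mulmxA comm.
split; [|split].
- move=> l l0 Hl; split.
  + move=> y [z ->].
    have [y0 Hy0] : img h (l *: (z *m f')) by apply/Hl; exists (z *m f').
    have [x Hx] := efk y0.
    exists x; apply: f'_inj => /=.
    by rewrite key -Hx -!scalemxAl -Hy0 scalerA.
  + move=> y [x ->].
    have [w Hw] : mults l ((x *m g) *m f') by apply/Hl; exists (x *m f); rewrite key.
    have [v Hv] := ef'k w.
    apply: (@div_row _ ef'%:Z l _ v); first by rewrite eqz_nat -lt0n.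
    apply: f'_inj => /=.
    by rewrite -!scalemxAl Hw -Hv !scalerA mulrC.
- move=> m m0 Hm y [y0 ->].
  have [x Hx] := efk y0.
  have [z Hz] := Hm _ (ex_intro _ x erefl).
  apply: (@div_row _ ef%:Z m _ (z *m f')); first by rewrite eqz_nat -lt0n.
  by rewrite scalemxAl Hx -key Hz -scalemxAl.
- move=> eh [eh0 ehk _].
  have P0 : (0 < ef * eh)%N /\ forall y : 'rV[int]_a', img g ((ef * eh)%N%:Z *: y).
    split; first by rewrite muln_gt0 ef0.
    move=> z.
    have [y0 Hy0] := ehk (z *m f').
    have [x Hx] := efk y0.
    exists x; apply: f'_inj => /=.
    by rewrite key -Hx -!scalemxAl -Hy0 scalerA PoszM.
  have [eg [[eg0 egk] egmin]] := @min_ex (fun e => (0 < e)%N /\ forall y : 'rV[int]_a', img g (e%:Z *: y)) _ P0.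
  exists eg; split; last exact: egmin.
  split => // e' e'0 He'; exact: egmin.
Qed.
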